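(* Let $A$ and $B$ be real symmetric matrices such that $A\in\mathcal{S}(G_A)$ has the strong spectral property with respect to $H_A$ and $B\in\mathcal{S}(G_B)$ has the strong spectral property with respect to $H_B$, where $G_A$ is a spanning subgraph of $H_A$ and $G_B$ is a spanning subgraph of $H_B$. If $A$ and $B$ have no common eigenvalues, then $A\oplus B$ has the strong spectral property with respect to the disjoint union $H_A\oplus H_B$.
   Context: For a graph $G$ on $\{1,\ldots,n\}$, $\mathcal{S}(G)$ is the set of $n\times n$ real symmetric matrices $A=(a_{ij})$ with, for $i\neq j$, $a_{ij}\neq0$ iff $\{i,j\}\in E(G)$; $\mathcal{S}^{\rm cl}(G)$ is the set of $n\times n$ real symmetric matrices whose $(i,j)$-entry, $i\neq j$, is nonzero only if $\{i,j\}\in E(G)$. $\overline{H}$ is the complement of $H$. If $A\in\mathcal{S}(G)$ and $H$ is a graph on the same vertex set with $E(G)\subseteq E(H)$, then $A$ has the strong spectral property with respect to $H$ if the only real symmetric $X$ with $X\in\mathcal{S}^{\rm cl}(\overline{H})$, $I\circ X=O$ and $AX-XA=O$ is $X=O$. $A\oplus B$ is the block diagonal direct sum, with vertices of $H_B$ indexed after those of $H_A$. *)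

(* Defs.v *)
From mathcomp Require Import all_boot all_order all_algebra.
From mathcomp Require Import reals.
Set Implicit Arguments. Unset Strict Implicit. Unset Printing Implicit Defensive.
Import Order.TTheory GRing.Theory Num.Theory.
Local Open Scope ring_scope.

Definition simple_graph (n : nat) (G : rel 'I_n) : Prop :=
  (forall i j, G i j = G j i) /\ (forall i, G i i = false).

Definition spanning_subgraph (n : nat) (G H : rel 'I_n) : Prop :=
  forall i j, G i j -> H i j.

Definition gcompl (n : nat) (H : rel 'I_n) : rel 'I_n :=
  fun i j => (i != j) && ~~ H i j.

Definition symmetric_mx (R : Type) (n : nat) (A : 'M[R]_n) : Prop := A^T = A.

Definition in_S (R : realType) (n : nat) (G : rel 'I_n) (A : 'M[R]_n) : Prop :=
  symmetric_mx A /\ forall i j, i != j -> (A i j != 0) = G i j.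

Definition in_Scl (R : realType) (n : nat) (G : rel 'I_n) (A : 'M[R]_n) : Prop :=
  symmetric_mx A /\ forall i j, i != j -> A i j != 0 -> G i j.

Definition SSP_wrt (R : realType) (n : nat) (A : 'M[R]_n) (H : rel 'I_n) : Prop :=
  forall X : 'M[R]_n,
    symmetric_mx X -> in_Scl (gcompl H) X -> (forall i, X i i = 0) ->
    A *m X - X *m A = 0 -> X = 0.

(* disjoint union of graphs; vertices of HB indexed after those of HA *)
Definition gunion (m n : nat) (HA : rel 'I_m) (HB : rel 'I_n) : rel 'I_(m + n) :=
  fun i j => match split i, split j with
             | inl a, inl b => HA a b
             | inr a, inr b => HB a b
             | _, _ => false
             end.

Definition dsum_mx (R : nmodType) (m n : nat) (A : 'M[R]_m) (B : 'M[R]_n)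
  : 'M[R]_(m + n) := block_mx A 0 0 B.

(* Main.v *)
Require Import Defs.
From mathcomp Require Import all_boot all_order all_algebra.
From mathcomp Require Import reals.
From mathcomp Require Import complex.
Import Order.TTheory GRing.Theory Num.Theory.
Local Open Scope ring_scope.
Section S.
Variable R : rcfType.
Lemma sym_eig_real n (B : 'M[R]_n) (z : R[i]) : B^T = B ->
  eigenvalue (map_mx (real_complex R) B) z -> z \is Num.real.
Proof.
move=> sB /eigenvalueP [v vB v0].
set B' := map_mx (real_complex R) B.
have sB' : B'^T = B' by rewrite /B' map_trmx sB.
set w := map_mx Num.conj v.
have cB : map_mx Num.conj B' = B'.
  apply/matrixP=> i j; rewrite !mxE; apply/eqP; rewrite -CrealE; apply/complex_realP; by exists (B i j).
have wB : w *m B' = z^* *: w.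
  by rewrite -cB -map_mxM vB map_mxZ.
have e1 : v *m B' *m w^T = z *: (v *m w^T) by rewrite vB scalemxAl.
have e2 : v *m B' *m w^T = z^* *: (v *m w^T).
  by rewrite -mulmxA -{1}sB' -trmx_mul wB linearZ /= scalemxAr.
have s0 : (v *m w^T) 0 0 != 0.
  rewrite !mxE; apply/negP=> /eqP H.
  case/eqP: v0; apply/matrixP=> i j; rewrite (ord1 i) mxE.
  have P0 : forall k : 'I_n, true -> 0 <= v 0 k * w^T k 0.
    by move=> k _; rewrite !mxE -normCK exprn_ge0.
  have := psumr_eq0P P0 H (i:=j) isT.
  by rewrite !mxE -normCK => /eqP; rewrite expf_eq0 /= normr_eq0 => /eqP.
rewrite CrealE; apply/eqP.
have := congr1 (fun M : 'M_1 => M 0 0) (etrans (esym e1) e2).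
rewrite /= [in X in X = _]mxE [in X in _ = X]mxE => /eqP; rewrite -subr_eq0 -mulrBl mulf_eq0 (negPf s0) orbF subr_eq0.
by move/eqP.
Qed.

Lemma sym_char_split n (B : 'M[R]_n) : B^T = B ->
  exists rs : seq R, char_poly B = \prod_(r <- rs) ('X - r%:P).
Proof.
move=> sB.
have [zs Hz] := closed_field_poly_normal (char_poly (map_mx (real_complex R) B)).
rewrite (monicP (char_poly_monic _)) scale1r in Hz.
have zr : forall z, z \in zs -> z = (@complex.Re R z)%:C%C.
  move=> z zin.
  have : root (char_poly (map_mx (real_complex R) B)) z by rewrite Hz root_prod_XsubC zin.
  by rewrite -eigenvalue_root_char => /(@sym_eig_real _ B z sB) /complex_realP [k ->].
exists (map (@complex.Re R) zs); apply: (map_poly_inj (real_complex R)).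
rewrite map_char_poly Hz rmorph_prod big_map; apply: eq_big_seq => z zin.
by rewrite /= map_polyXsubC {1}(zr z zin).
Qed.

Lemma sylv m n (A : 'M[R]_m) (B : 'M[R]_n) (X : 'M[R]_(m,n)) : B^T = B ->
  (forall a, ~(eigenvalue A a /\ eigenvalue B a)) -> A *m X = X *m B -> X = 0.
Proof.
case: n B X => [|n] B X sB nc AX; first by apply/matrixP => i [].
have [rs Hrs] := @sym_char_split _ B sB.
pose PA s := foldr (fun r M => (A - r%:M) *m M) 1%:M s.
pose PB s := foldr (fun r M => (B - r%:M) *m M) 1%:M s.
have comm : forall s, PA s *m X = X *m PB s.
  elim=> [|r s IH] /=; first by rewrite mul1mx mulmx1.
  rewrite -mulmxA IH !mulmxA; congr (_ *m _).
  by rewrite mulmxBl mulmxBr AX scalar_mxC.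
have PB0 : PB rs = 0.
  have : horner_mx B (char_poly B) = 0 := Cayley_Hamilton B.
  rewrite Hrs; suff -> : horner_mx B (\prod_(r <- rs) ('X - r%:P)) = PB rs by [].
  rewrite /PB; elim: rs {Hrs} => [|r s IH]; rewrite ?big_nil ?big_cons /=.
    by rewrite rmorph1.
  by rewrite rmorphM /= rmorphB /= horner_mx_X horner_mx_C IH.
have PAu : PA rs \in unitmx.
  have : forall r, r \in rs -> ~~ eigenvalue A r.
    move=> r rin; apply/negP => eA; apply: (nc r); split=> //.
    by rewrite eigenvalue_root_char Hrs root_prod_XsubC rin.
  elim: rs {Hrs PB0} => [|r s IH] H /=; first exact: unitmx1.
  rewrite unitmx_mul IH ?andbT; last by move=> x xs; apply: H; rewrite inE xs orbT.
  have := H r; rewrite inE eqxx /eigenvalue /eigenspace negbK => /(_ isT).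
  by rewrite kermx_eq0 row_free_unit.
have := comm rs; rewrite PB0 mulmx0 => /(congr1 (mulmx (invmx (PA rs)))).
by rewrite mulKmx // mulmx0.
Qed.
End S.

Theorem proposition3p5 (R : realType) (m n : nat)
  (GA HA : rel 'I_m) (GB HB : rel 'I_n) (A : 'M[R]_m) (B : 'M[R]_n) :
  simple_graph GA -> simple_graph HA -> simple_graph GB -> simple_graph HB ->
  spanning_subgraph GA HA -> spanning_subgraph GB HB ->
  in_S GA A -> in_S GB B ->
  SSP_wrt A HA -> SSP_wrt B HB ->
  (forall a : R, ~ (eigenvalue A a /\ eigenvalue B a)) ->
  SSP_wrt (dsum_mx A B) (gunion HA HB).
Proof.
move=> _ _ _ _ _ _ [sA _] [sB _] ssA ssB nc X sX [_ sclX] dX cX.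
have sl : forall i : 'I_m, split (lshift n i) = inl i := fun i => unsplitK (inl i).
have sr : forall i : 'I_n, split (rshift m i) = inr i := fun i => unsplitK (inr i).
move: cX sX; rewrite /symmetric_mx /dsum_mx -{1 2 3 4}(submxK X).
rewrite !mulmx_block !mul0mx !mulmx0 !addr0 !add0r opp_block_mx add_block_mx -block_mx0.
move=> /eq_block_mx [c1 c2 c3 c4].
rewrite tr_block_mx => /eq_block_mx [t1 t2 t3 t4].
have X1 : ulsubmx X = 0.
  apply: ssA => //; last by move=> i; rewrite !mxE dX.
  split=> // i j ij; rewrite !mxE => nz.
  have := sclX (lshift n i) (lshift n j); rewrite eq_lshift ij => /(_ isT nz).
  by rewrite /gcompl /gunion !sl eq_lshift.
have X4 : drsubmx X = 0.
  apply: ssB => //; last by move=> i; rewrite !mxE dX.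
  split=> // i j ij; rewrite !mxE => nz.
  have := sclX (rshift m i) (rshift m j); rewrite eq_rshift ij => /(_ isT nz).
  by rewrite /gcompl /gunion !sr eq_rshift.
have X2 : ursubmx X = 0.
  apply: (@sylv R _ _ A B) sB nc _; apply/eqP; by rewrite -subr_eq0 c2.
have X3 : dlsubmx X = 0 by rewrite -t3 X2 trmx0.
by rewrite -[LHS]submxK X1 X2 X3 X4.
Qed.
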